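(* Let $(V,\nu)$ be a gauged space and $S\subseteq V$ a linear subspace. Then $S$ is a gauge ideal of $(V,\nu)$ if and only if there exist a gauged space $(W,\omega)$ and a gauge-bounded linear map $\phi:V\to W$ with $S=\ker\phi$. Moreover, when $S$ is a gauge ideal, $q(x+S)=\inf\{\nu(y):y\in x+S\}$ is a proper gauge on the algebraic quotient $V/S$, and the quotient map $\pi:(V,\nu)\to(V/S,q)$ is gauge-contractive with kernel $S$.
   Context: A gauge on a real vector space $V$ is a map $\nu:V\to[0,\infty)$ with $\nu(x+y)\le\nu(x)+\nu(y)$ and $\nu(tx)=t\nu(x)$ for all $x,y\in V$, $t>0$; it is proper if for every $x\neq0$, $\nu(x)\neq0$ or $\nu(-x)\neq0$; a gauged space is a pair $(V,\nu)$ with $\nu$ a proper gauge. A linear map $\phi:(V,\nu)\to(W,\omega)$ is gauge-bounded if there is $C>0$ with $\omega(\phi(x))\le C\nu(x)$ for all $x$, and gauge-contractive if $C=1$ works. A subspace $S$ is a gauge ideal if whenever $x\in V$ and there are sequences $(a_n),(b_n)\subseteq S$ with $\nu(x-a_n)\to0$ and $\nu(b_n-x)\to0$, then $x\in S$. *)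

(* Defs.v *)
From Stdlib Require Import Reals.
Open Scope R_scope.

Record RVS := {
  car :> Type;
  vzero : car;
  vadd : car -> car -> car;
  vopp : car -> car;
  vscal : R -> car -> car;
  vadd_assoc : forall x y z, vadd x (vadd y z) = vadd (vadd x y) z;
  vadd_comm : forall x y, vadd x y = vadd y x;
  vadd_0 : forall x, vadd x vzero = x;
  vadd_opp : forall x, vadd x (vopp x) = vzero;
  vscal_assoc : forall a b x, vscal a (vscal b x) = vscal (a * b) x;
  vscal_1 : forall x, vscal 1 x = x;
  vscal_distr_v : forall a x y, vscal a (vadd x y) = vadd (vscal a x) (vscal a y);
  vscal_distr_s : forall a b x, vscal (a + b) x = vadd (vscal a x) (vscal b x)
}.

Arguments vzero {_}.
Arguments vadd {_} _ _.
Arguments vopp {_} _.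
Arguments vscal {_} _ _.

Definition vsub {V : RVS} (x y : V) : V := vadd x (vopp y).

Definition is_linear {V W : RVS} (f : V -> W) : Prop :=
  (forall x y, f (vadd x y) = vadd (f x) (f y)) /\
  (forall (a : R) x, f (vscal a x) = vscal a (f x)).

Definition is_subspace {V : RVS} (S : V -> Prop) : Prop :=
  S vzero /\ (forall x y, S x -> S y -> S (vadd x y)) /\
  (forall (a : R) x, S x -> S (vscal a x)).

Definition is_gauge {V : RVS} (nu : V -> R) : Prop :=
  (forall x, 0 <= nu x) /\
  (forall x y, nu (vadd x y) <= nu x + nu y) /\
  (forall (t : R) x, 0 < t -> nu (vscal t x) = t * nu x).

Definition is_proper_gauge {V : RVS} (nu : V -> R) : Prop :=
  is_gauge nu /\ (forall x, x <> vzero -> nu x <> 0 \/ nu (vopp x) <> 0).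

Definition gauge_bounded {V W : RVS} (nu : V -> R) (om : W -> R) (f : V -> W) : Prop :=
  exists C : R, 0 < C /\ forall x, om (f x) <= C * nu x.

Definition gauge_contractive {V W : RVS} (nu : V -> R) (om : W -> R) (f : V -> W) : Prop :=
  forall x, om (f x) <= nu x.

Definition gauge_ideal {V : RVS} (nu : V -> R) (S : V -> Prop) : Prop :=
  is_subspace S /\
  forall (x : V) (a b : nat -> V),
    (forall n, S (a n)) -> (forall n, S (b n)) ->
    Un_cv (fun n => nu (vsub x (a n))) 0 ->
    Un_cv (fun n => nu (vsub (b n) x)) 0 ->
    S x.

Definition is_glb (E : R -> Prop) (m : R) : Prop :=
  (forall r, E r -> m <= r) /\ (forall m', (forall r, E r -> m' <= r) -> m' <= m).

Definition kernel_is {V W : RVS} (f : V -> W) (S : V -> Prop) : Prop :=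
  forall x, S x <-> f x = vzero.

(* Main.v *)
Require Import Defs.
From Stdlib Require Import Reals Lra Lia Classical FunctionalExtensionality PropExtensionality ProofIrrelevance IndefiniteDescription.
Open Scope R_scope.

Lemma v0l (V:RVS) (x:V) : vadd vzero x = x.
Proof. rewrite vadd_comm; apply vadd_0. Qed.

Lemma vcancel (V:RVS) (a x y:V): vadd a x = vadd a y -> x = y.
Proof.
  intros H. rewrite <- (v0l V x), <- (v0l V y), <- (vadd_opp V a),
    (vadd_comm V a (vopp a)), <- !vadd_assoc, H. reflexivity.
Qed.

Lemma vscal0 (V:RVS) (x:V) : vscal 0 x = vzero.
Proof.
  apply (vcancel V (vscal 0 x)). rewrite vadd_0, <- vscal_distr_s, Rplus_0_r. reflexivity.
Qed.

Lemma vscala0 (V:RVS) (a:R) : vscal a (@vzero V) = vzero.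
Proof.
  apply (vcancel V (vscal a vzero)). rewrite vadd_0, <- vscal_distr_v, vadd_0. reflexivity.
Qed.

Lemma vopp_scal (V:RVS) (x:V) : vopp x = vscal (-1) x.
Proof.
  apply (vcancel V x). rewrite vadd_opp. rewrite <- (vscal_1 V x) at 1.
  rewrite <- vscal_distr_s, Rplus_opp_r, vscal0. reflexivity.
Qed.

Lemma vopp0 (V:RVS) : vopp (@vzero V) = vzero.
Proof. rewrite vopp_scal; apply vscala0. Qed.

Lemma vopp_add (V:RVS) (x y:V) : vopp (vadd x y) = vadd (vopp x) (vopp y).
Proof. rewrite !vopp_scal; apply vscal_distr_v. Qed.

Lemma vopp_opp (V:RVS) (x:V) : vopp (vopp x) = x.
Proof. rewrite !vopp_scal, vscal_assoc. replace (-1 * -1) with 1 by ring. apply vscal_1. Qed.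

Lemma vscal_opp (V:RVS) a (x:V) : vscal a (vopp x) = vopp (vscal a x).
Proof. rewrite !vopp_scal, !vscal_assoc, Rmult_comm. reflexivity. Qed.

Lemma vopp_l (V:RVS) (x:V) : vadd (vopp x) x = vzero.
Proof. rewrite vadd_comm; apply vadd_opp. Qed.

Lemma vsub_sub (V:RVS) (x y:V) : vsub x (vsub x y) = y.
Proof. unfold vsub. rewrite vopp_add, vopp_opp, vadd_assoc, vadd_opp, v0l. reflexivity. Qed.

Lemma vsub_addl (V:RVS) (x y:V) : vsub (vadd x y) x = y.
Proof. unfold vsub. rewrite (vadd_comm V x y), <- vadd_assoc, vadd_opp, vadd_0. reflexivity. Qed.

Lemma vsub_xx (V:RVS) (x:V) : vsub x x = vzero.
Proof. apply vadd_opp. Qed.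

Lemma vsub_0 (V:RVS) (x:V) : vsub x vzero = x.
Proof. unfold vsub. rewrite vopp0, vadd_0. reflexivity. Qed.

Lemma vsub_chain (V:RVS) (z x y:V) : vadd (vsub z x) (vsub x y) = vsub z y.
Proof. unfold vsub. rewrite <- vadd_assoc, (vadd_assoc V (vopp x)), vopp_l, v0l. reflexivity. Qed.

Lemma vsub_add2 (V:RVS) (a b c d:V) : vsub (vadd a b) (vadd c d) = vadd (vsub a c) (vsub b d).
Proof.
  unfold vsub. rewrite vopp_add, !vadd_assoc. f_equal.
  rewrite <- !vadd_assoc. f_equal. apply vadd_comm.
Qed.

Lemma vsub_scal (V:RVS) a (x y:V) : vsub (vscal a x) (vscal a y) = vscal a (vsub x y).
Proof. unfold vsub. rewrite vscal_distr_v, vscal_opp. reflexivity. Qed.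

Lemma vsub_opp (V:RVS) (x y:V) : vsub (vopp x) (vopp y) = vopp (vsub x y).
Proof. unfold vsub. rewrite vopp_add. reflexivity. Qed.

Lemma lin0 (V W:RVS) (f:V->W) : is_linear f -> f vzero = vzero.
Proof.
  intros [Ha Hs]. apply (vcancel W (f vzero)). rewrite <- Ha, !vadd_0. reflexivity.
Qed.

Lemma linopp (V W:RVS) (f:V->W) x : is_linear f -> f (vopp x) = vopp (f x).
Proof. intros [Ha Hs]. rewrite !vopp_scal, Hs. reflexivity. Qed.

Lemma linsub (V W:RVS) (f:V->W) x y : is_linear f -> f (vsub x y) = vsub (f x) (f y).
Proof. intros Hl. unfold vsub. rewrite (proj1 Hl), linopp by exact Hl. reflexivity. Qed.

Lemma sub_opp (V:RVS) (S:V->Prop) x : is_subspace S -> S x -> S (vopp x).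
Proof. intros (H0&Ha&Hs) Hx. rewrite vopp_scal. auto. Qed.

Lemma sub_sub (V:RVS) (S:V->Prop) x y : is_subspace S -> S x -> S y -> S (vsub x y).
Proof. intros HS Hx Hy. unfold vsub. apply (proj1 (proj2 HS)); [exact Hx | apply sub_opp; assumption]. Qed.

Lemma seq_to0 (u : nat -> R) : (forall n, 0 <= u n) -> (forall n, u n < / INR (Datatypes.S n)) -> Un_cv u 0.
Proof.
  intros H0 H eps Heps. destruct (archimed_cor1 eps Heps) as [N [HN HN0]].
  exists N. intros n Hn. unfold Rdist. rewrite Rminus_0_r, Rabs_pos_eq by auto.
  apply Rlt_le_trans with (/ INR (Datatypes.S n)); auto.
  apply Rle_trans with (/ INR N); [|lra].
  apply Rinv_le_contravar. apply lt_0_INR; lia. apply le_INR; lia.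
Qed.

Lemma lim_bound (c C : R) (u : nat -> R) : 0 <= c -> 0 < C -> (forall n, c <= C * u n) -> Un_cv u 0 -> c = 0.
Proof.
  intros Hc HC Hb Hu. destruct (Req_dec c 0) as [->|Hne]; auto.
  assert (Hpos : c / C > 0). { apply Rdiv_lt_0_compat; lra. }
  destruct (Hu _ Hpos) as [N HN]. specialize (HN N (le_n N)). unfold Rdist in HN.
  rewrite Rminus_0_r in HN. pose proof (Rle_abs (u N)).
  assert (C * u N < C * (c / C)). { apply Rmult_lt_compat_l; lra. }
  replace (C * (c / C)) with c in H0 by (field; lra). specialize (Hb N). lra.
Qed.

Lemma part1_back (V:RVS) (nu : V -> R) (S : V -> Prop) :
  is_subspace S ->
  (exists (W : RVS) (om : W -> R) (phi : V -> W),
       is_proper_gauge om /\ is_linear phi /\ gauge_bounded nu om phi /\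
       kernel_is phi S) -> gauge_ideal nu S.
Proof.
  intros HS [W [om [phi [[[Hom0 [Homa Homs]] Hprop] [Hl [[C [HC Hb]] Hk]]]]]].
  split; auto. intros x a b Ha Hb' Hca Hcb.
  apply Hk. destruct (classic (phi x = vzero)) as [E|E]; auto. exfalso.
  assert (e1 : om (phi x) = 0).
  { apply (lim_bound _ C (fun n => nu (vsub x (a n)))); auto. intros n.
    rewrite <- Hb. rewrite linsub by exact Hl. rewrite (proj1 (Hk _) (Ha n)), vsub_0. lra. }
  assert (e2 : om (vopp (phi x)) = 0).
  { apply (lim_bound _ C (fun n => nu (vsub (b n) x))); auto. intros n.
    rewrite <- Hb. rewrite linsub by exact Hl. rewrite (proj1 (Hk _) (Hb' n)).
    unfold vsub; rewrite v0l. lra. }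
  destruct (Hprop _ E); auto.
Qed.

Lemma part2 (V:RVS) (nu : V -> R) (S : V -> Prop) :
  is_proper_gauge nu -> gauge_ideal nu S ->
     forall (Q : RVS) (pi : V -> Q),
       is_linear pi -> (forall z : Q, exists y : V, pi y = z) ->
       (forall x y : V, pi x = pi y <-> S (vsub x y)) ->
       forall q : Q -> R,
         (forall z : Q, is_glb (fun r => exists y : V, pi y = z /\ r = nu y) (q z)) ->
         is_proper_gauge q /\ gauge_contractive nu q pi /\ kernel_is pi S.
Proof.
  intros [[Hn0 [Hna Hns]] Hnp] [HS HI] Q pi Hl Hsurj Hpi q Hq.
  assert (qle : forall y, q (pi y) <= nu y).
  { intros y. apply (proj1 (Hq (pi y))). exists y; auto. }
  assert (qge : forall z m, (forall y, pi y = z -> m <= nu y) -> m <= q z).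
  { intros z m H. apply (proj2 (Hq z)). intros r [y [<- ->]]. auto. }
  assert (Hker : kernel_is pi S).
  { intros x. rewrite <- (lin0 _ _ pi Hl), Hpi, vsub_0. tauto. }
  assert (q0 : forall z, 0 <= q z).
  { intros z. apply qge. intros; auto. }
  assert (qh : forall t z, 0 < t -> q (vscal t z) <= t * q z).
  { intros t z Ht.
    assert (q (vscal t z) / t <= q z).
    { apply qge. intros y <-. rewrite <- (proj2 Hl).
      pose proof (qle (vscal t y)). rewrite Hns in H by auto.
      apply (Rmult_le_reg_l t); auto. field_simplify; lra. }
    apply (Rmult_le_reg_l (/ t)). apply Rinv_0_lt_compat; auto.
    replace (/ t * (t * q z)) with (q z) by (field; lra). lra. }
  assert (small : forall z, q z = 0 -> forall n:nat, exists y, pi y = z /\ nu y < / INR (Datatypes.S n)).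
  { intros z Hz n. apply NNPP. intros Hno.
    assert (/ INR (Datatypes.S n) <= q z).
    { apply qge. intros y Hy. apply Rnot_lt_le. intros Hlt. apply Hno. eauto. }
    assert (0 < / INR (Datatypes.S n)). { apply Rinv_0_lt_compat, lt_0_INR; lia. }
    lra. }
  split; [|split; [exact qle | exact Hker]].
  split.
  - split; [exact q0|split].
    + intros z1 z2.
      assert (q (vadd z1 z2) - q z2 <= q z1).
      { apply qge. intros y1 <-.
        assert (q (vadd (pi y1) z2) - nu y1 <= q z2).
        { apply qge. intros y2 <-. rewrite <- (proj1 Hl).
          pose proof (qle (vadd y1 y2)). pose proof (Hna y1 y2). lra. }
        lra. }
      lra.
    + intros t z Ht. apply Rle_antisym; auto.
      assert (Hz : z = vscal (/ t) (vscal t z)).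
      { rewrite vscal_assoc, Rinv_l, vscal_1 by lra. reflexivity. }
      pose proof (qh (/ t) (vscal t z) (Rinv_0_lt_compat _ Ht)). rewrite <- Hz in H.
      apply (Rmult_le_reg_l (/ t)). apply Rinv_0_lt_compat; auto.
      replace (/ t * (t * q z)) with (q z) by (field; lra). lra.
  - intros z Hz. destruct (Req_dec (q z) 0) as [E1|E1]; [|auto].
    destruct (Req_dec (q (vopp z)) 0) as [E2|E2]; [|auto].
    exfalso. apply Hz. destruct (Hsurj z) as [x <-].
    destruct (functional_choice _ (small _ E1)) as [f Hf].
    destruct (functional_choice _ (small _ E2)) as [g Hg].
    apply Hker.
    apply (HI x (fun n => vsub x (f n)) (fun n => vadd x (g n))).
    + intros n. apply Hker. rewrite linsub by exact Hl. rewrite (proj1 (Hf n)). apply vsub_xx.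
    + intros n. apply Hker. rewrite (proj1 Hl), (proj1 (Hg n)), <- (linopp _ _ _ _ Hl).
      rewrite <- (proj1 Hl), vadd_opp. apply lin0; auto.
    + apply seq_to0; intros n; rewrite vsub_sub; [auto | apply Hf].
    + apply seq_to0; intros n; rewrite vsub_addl; [auto | apply Hg].
Qed.

Section Quot.
Variable V : RVS.
Variable S : V -> Prop.
Hypothesis HS : is_subspace S.

Definition qcar := {P : V -> Prop | exists x, P = (fun y => S (vsub y x))}.
Definition cls (x : V) : qcar := exist _ (fun y => S (vsub y x)) (ex_intro _ x eq_refl).

Lemma sig_ext (a b : qcar) : proj1_sig a = proj1_sig b -> a = b.
Proof. destruct a, b; simpl; intros ->. f_equal; apply proof_irrelevance. Qed.

Lemma cls_eq x y : cls x = cls y <-> S (vsub x y).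
Proof.
  split.
  - intros H. apply (f_equal (@proj1_sig _ _)) in H. simpl in H.
    pose proof (f_equal (fun P => P x) H) as H1. simpl in H1. rewrite <- H1, vsub_xx.
    apply (proj1 HS).
  - intros H. apply sig_ext. simpl. apply functional_extensionality. intros z.
    apply propositional_extensionality. split; intros Hz.
    + rewrite <- (vsub_chain V z x y). apply (proj1 (proj2 HS)); auto.
    + rewrite <- (vsub_chain V z y x). apply (proj1 (proj2 HS)); auto.
      replace (vsub y x) with (vopp (vsub x y)) by (unfold vsub; rewrite vopp_add, vopp_opp; apply vadd_comm).
      apply sub_opp; auto.
Qed.

Definition rep (P : qcar) : V := proj1_sig (constructive_indefinite_description _ (proj2_sig P)).

Lemma cls_rep P : cls (rep P) = P.
Proof.
  apply sig_ext. unfold rep. destruct (constructive_indefinite_description _ (proj2_sig P)) as [x Hx].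
  simpl. rewrite Hx. reflexivity.
Qed.

Lemma cls_surj P : exists x, P = cls x.
Proof. exists (rep P). symmetry; apply cls_rep. Qed.

Lemma rep_cls x : S (vsub (rep (cls x)) x).
Proof. apply cls_eq. apply cls_rep. Qed.

Definition qzero := cls vzero.
Definition qadd P1 P2 := cls (vadd (rep P1) (rep P2)).
Definition qopp P := cls (vopp (rep P)).
Definition qscal a P := cls (vscal a (rep P)).

Lemma qadd_cls x y : qadd (cls x) (cls y) = cls (vadd x y).
Proof.
  apply cls_eq. rewrite vsub_add2. apply (proj1 (proj2 HS)); apply rep_cls.
Qed.
Lemma qopp_cls x : qopp (cls x) = cls (vopp x).
Proof. apply cls_eq. rewrite vsub_opp. apply sub_opp; auto. apply rep_cls. Qed.
Lemma qscal_cls a x : qscal a (cls x) = cls (vscal a x).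
Proof. apply cls_eq. rewrite vsub_scal. apply (proj2 (proj2 HS)). apply rep_cls. Qed.

Ltac qd P := let x := fresh "x" in destruct (cls_surj P) as [x ->].

Definition QV : RVS.
Proof.
  refine {| car := qcar; vzero := qzero; vadd := qadd; vopp := qopp; vscal := qscal |}.
  - intros a b c; qd a; qd b; qd c. rewrite !qadd_cls, vadd_assoc; reflexivity.
  - intros a b; qd a; qd b. rewrite !qadd_cls, vadd_comm; reflexivity.
  - intros a; qd a. unfold qzero. rewrite qadd_cls, vadd_0; reflexivity.
  - intros a; qd a. unfold qzero. rewrite qopp_cls, qadd_cls, vadd_opp; reflexivity.
  - intros a b c; qd c. rewrite !qscal_cls, vscal_assoc; reflexivity.
  - intros a; qd a. rewrite qscal_cls, vscal_1; reflexivity.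
  - intros a b c; qd b; qd c. rewrite qadd_cls, !qscal_cls, qadd_cls, vscal_distr_v; reflexivity.
  - intros a b c; qd c. rewrite !qscal_cls, qadd_cls, vscal_distr_s; reflexivity.
Defined.

Lemma cls_linear : @is_linear V QV cls.
Proof. split; intros; simpl; [rewrite qadd_cls | rewrite qscal_cls]; reflexivity. Qed.

End Quot.

Lemma glb_exists (V:RVS) (Q:Type) (nu : V -> R) (pi : V -> Q) :
  (forall x, 0 <= nu x) -> (forall z, exists y, pi y = z) ->
  exists q : Q -> R, forall z, is_glb (fun r => exists y, pi y = z /\ r = nu y) (q z).
Proof.
  intros H0 Hs.
  assert (forall z, {m | is_lub (fun s => exists y, pi y = z /\ - s = nu y) m}).
  { intros z. apply completeness.
    - exists 0. intros s [y [_ Hy]]. pose proof (H0 y). lra.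
    - destruct (Hs z) as [y Hy]. exists (- nu y). exists y. split; auto; ring. }
  exists (fun z => - proj1_sig (X z)). intros z. destruct (X z) as [m [Hub Hl]]. simpl. split.
  - intros r [y [Hy ->]]. assert (- nu y <= m). { apply Hub. exists y. split; auto; ring. } lra.
  - intros m' Hm'. assert (m <= - m').
    { apply Hl. intros s [y [Hy Hy']]. assert (m' <= nu y). { apply Hm'. eauto. } lra. }
    lra.
Qed.

Theorem proposition2p25 (V : RVS) (nu : V -> R) (S : V -> Prop) :
  is_proper_gauge nu -> is_subspace S ->
  (gauge_ideal nu S <->
     exists (W : RVS) (om : W -> R) (phi : V -> W),
       is_proper_gauge om /\ is_linear phi /\ gauge_bounded nu om phi /\
       kernel_is phi S)
  /\
  (gauge_ideal nu S ->
     forall (Q : RVS) (pi : V -> Q),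
       is_linear pi -> (forall z : Q, exists y : V, pi y = z) ->
       (forall x y : V, pi x = pi y <-> S (vsub x y)) ->
       forall q : Q -> R,
         (forall z : Q, is_glb (fun r => exists y : V, pi y = z /\ r = nu y) (q z)) ->
         is_proper_gauge q /\ gauge_contractive nu q pi /\ kernel_is pi S).
Proof.
  intros Hnu HS. pose proof (part2 V nu S Hnu) as P2.
  split; [split|exact P2].
  - intros HI.
    assert (surj : forall z : QV V S HS, exists y : V, cls V S y = z).
    { intros z. destruct (cls_surj V S z) as [x Hx]. exists x. symmetry; exact Hx. }
    destruct (glb_exists V (QV V S HS) nu (cls V S) (proj1 (proj1 Hnu)) surj) as [q Hq].
    destruct (P2 HI (QV V S HS) (cls V S) (cls_linear V S HS) surj (fun x y => cls_eq V S HS x y) q Hq)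
      as [Hp [Hc Hk]].
    exists (QV V S HS), q, (cls V S). split; [exact Hp|split; [exact (cls_linear V S HS)|split; [|exact Hk]]].
    exists 1. split; [lra|]. intros x. rewrite Rmult_1_l. apply Hc.
  - apply part1_back; exact HS.
Qed.
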